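(* Let $\mathbf{M}_\sigma\in\mathbb{R}^{n\times n}$ be symmetric positive semidefinite, $\mathbf{M}_\nu\in\mathbb{R}^{n\times n}$ symmetric positive definite, $\mathbf{C}\in\mathbb{R}^{n\times n}$ (discrete curl), $\mathbf{P}\in\mathbb{R}^{n\times k}$ (reduced projection of a tree-cotree gauge in the non-conducting region) and $\mathbf{X}_\mathrm{s}\in\mathbb{R}^{n\times n_\mathrm{s}}$ (discrete winding function). Set $\bar{\mathbf{M}}_\sigma=\mathbf{P}^\top\mathbf{M}_\sigma\mathbf{P}$, $\mathbf{K}_\nu=\mathbf{P}^\top\mathbf{C}^\top\mathbf{M}_\nu\mathbf{C}\mathbf{P}$, $\bar{\mathbf{X}}_\mathrm{s}=\mathbf{P}^\top\mathbf{X}_\mathrm{s}$, and assume that $\lambda\bar{\mathbf{M}}_\sigma+\mathbf{K}_\nu$ is positive definite for every $\lambda>0$, that $\bar{\mathbf{X}}_\mathrm{s}$ has full column rank, and that $\mathrm{im}\,\bar{\mathbf{X}}_\mathrm{s}\perp\mathrm{im}\,\bar{\mathbf{M}}_\sigma$. Then the gauged, spatially discretised A* system with circuit coupling \begin{align*} \bar{\mathbf{M}}_\sigma\tfrac{\mathrm{d}}{\mathrm{d}t}\mathbf{a}_\mathrm{red}+\mathbf{K}_\nu\mathbf{a}_\mathrm{red}-\bar{\mathbf{X}}_\mathrm{s}\mathbf{i}_\mathrm{s}&=0,\\ \tfrac{\mathrm{d}}{\mathrm{d}t}\bar{\mathbf{X}}_\mathrm{s}^\top\mathbf{a}_\mathrm{red}-\mathbf{v}_\mathrm{s}&=0,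 \end{align*} with $\mathbf{x}_\lambda=\mathbf{a}_\mathrm{red}$, $\mathbf{i}_\lambda=\mathbf{i}_\mathrm{s}$, $\mathbf{v}_\lambda=\mathbf{v}_\mathrm{s}$, is an inductance-like element.
   Context: Positive definite means $\mathbf{x}^\top\mathbf{M}\mathbf{x}>0$ for $\mathbf{x}\ne0$. Inductance-like element: a device described by a DAE $\mathbf{F}(\frac{\mathrm{d}}{\mathrm{d}t}\mathbf{x}_\lambda,\frac{\mathrm{d}}{\mathrm{d}t}\mathbf{i}_\lambda,\mathbf{x}_\lambda,\mathbf{i}_\lambda,\mathbf{v}_\lambda,t)=0$ with $\mathbf{x}_\lambda:\mathcal{I}\to\mathbb{R}^{n_\mathrm{dof}}$, $\mathbf{i}_\lambda,\mathbf{v}_\lambda:\mathcal{I}\to\mathbb{R}^{n_\lambda}$, such that at most one differentiation $\frac{\mathrm{d}}{\mathrm{d}t}\mathbf{F}=0$ is needed to obtain from $\mathbf{F}=0$ and $\frac{\mathrm{d}}{\mathrm{d}t}\mathbf{F}=0$ (by algebraic manipulations) a system $\frac{\mathrm{d}}{\mathrm{d}t}\mathbf{x}_\lambda=\mathbf{f}_\mathbf{x}(\mathbf{x}_\lambda,\mathbf{i}_\lambda,\mathbf{v}_\lambda,t)$, $\frac{\mathrm{d}}{\mathrm{d}t}\phi(\mathbf{i}_\lambda,\mathbf{x}_\lambda,t)=\mathbf{f}_\phi(\mathbf{x}_\lambda,\mathbf{i}_\lambda,\mathbf{v}_\lambda,t)$, where $\partial\phi/\partial\mathbf{i}_\lambda$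 is regular and $\frac{\partial}{\partial\mathbf{v}_\lambda}\Big((\frac{\partial\phi}{\partial\mathbf{i}_\lambda})^{-1}(-\frac{\partial\phi}{\partial\mathbf{x}_\lambda}\mathbf{f}_\mathbf{x}-\frac{\partial\phi}{\partial t}+\mathbf{f}_\phi)\Big)$ is positive definite. $\mathbf{a}_\mathrm{red}$ are the gauged degrees of freedom of the magnetic vector potential; $\mathbf{M}_\sigma,\mathbf{M}_\nu$ are the conductivity and reluctivity material matrices. *)

(* Defs.v *)
From mathcomp Require Import all_boot all_order all_algebra.
From mathcomp Require Import all_classical all_reals all_analysis.
Set Implicit Arguments. Unset Strict Implicit. Unset Printing Implicit Defensive.
Import Order.TTheory GRing.Theory Num.Theory.
Local Open Scope ring_scope.

Definition posdef (R : realType) (n : nat) (A : 'M[R]_n) : Prop :=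
  forall u : 'cV[R]_n, u != 0 -> 0 < (u^T *m A *m u) 0 0.

Definition possemidef (R : realType) (n : nat) (A : 'M[R]_n) : Prop :=
  forall u : 'cV[R]_n, 0 <= (u^T *m A *m u) 0 0.

Definition jacobian (R : realType) (m n : nat)
  (f : 'cV[R]_m -> 'cV[R]_n) (p : 'cV[R]_m) : 'M[R]_(n, m) :=
  \matrix_(r < n, c < m) ('d f (p : ('cV[R]_m : normedModType R)) (delta_mx c 0)) r 0.

(* Inductance-like element for a DAE
     F(d/dt x, d/dt i, x, i, v, t) = 0,
   x : R -> R^nd, i v : R -> R^nl, F valued in R^ne.
   "At most one differentiation and algebraic manipulations" is rendered
   as: at every time t0, for every (differentiable) trajectory at which
   F = 0 and d/dt F = 0 hold at t0, the explicit relations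
     d/dt x = fx(x,i,v,t),  d/dt phi(i,x,t) = fphi(x,i,v,t)
   hold at t0. *)
Definition inductance_like (R : realType) (nd nl ne : nat)
  (F : 'cV[R]_nd -> 'cV[R]_nl -> 'cV[R]_nd -> 'cV[R]_nl -> 'cV[R]_nl -> R ->
       'cV[R]_ne) : Prop :=
  exists (fx : 'cV[R]_nd -> 'cV[R]_nl -> 'cV[R]_nl -> R -> 'cV[R]_nd)
         (phi : 'cV[R]_nl -> 'cV[R]_nd -> R -> 'cV[R]_nl)
         (fphi : 'cV[R]_nd -> 'cV[R]_nl -> 'cV[R]_nl -> R -> 'cV[R]_nl),
  (forall i x t,
      differentiable (fun i' => phi i' x t) (i : ('cV[R]_nl : normedModType R)) /\
      differentiable (fun x' => phi i x' t) (x : ('cV[R]_nd : normedModType R)) /\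
      derivable (fun t' => phi i x t') t 1) /\
  (forall i x t, jacobian (fun i' => phi i' x t) i \in unitmx) /\
  (forall x i v t,
      let psi := fun v' : 'cV[R]_nl =>
        invmx (jacobian (fun i' => phi i' x t) i) *m
          (- (jacobian (fun x' => phi i x' t) x *m fx x i v' t)
           - derive1 (fun t' => phi i x t') t
           + fphi x i v' t) in
      differentiable psi (v : ('cV[R]_nl : normedModType R)) /\ posdef (jacobian psi v)) /\
  (forall (xs : R -> 'cV[R]_nd) (is_ vs : R -> 'cV[R]_nl) (t0 : R),
      (forall s, derivable xs s 1) -> (forall s, derivable is_ s 1) ->
      let G := fun s => F (derive1 xs s) (derive1 is_ s) (xs s) (is_ s) (vs s) s in
      G t0 = 0 -> derivable G t0 1 -> derive1 G t0 = 0 ->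
      derive1 xs t0 = fx (xs t0) (is_ t0) (vs t0) t0 /\
      derivable (fun s => phi (is_ s) (xs s) s) t0 1 /\
      derive1 (fun s => phi (is_ s) (xs s) s) t0 = fphi (xs t0) (is_ t0) (vs t0) t0).

(* Main.v *)
Require Import Defs.
From mathcomp Require Import all_boot all_order all_algebra.
From mathcomp Require Import all_classical all_reals all_analysis.
Import Order.TTheory GRing.Theory Num.Theory.
Import numFieldNormedType.Exports.
Local Open Scope ring_scope.
Local Open Scope classical_set_scope.
Set Implicit Arguments.
Section Aff.
Variable R : realType.

Lemma aff_D m p (A : 'M[R]_(p, m)) (c : 'cV[R]_p) (a v : 'cV[R]_m) :
  'D_v (fun w : 'cV[R]_m => A *m w + c) a = A *m v.
Proof.
rewrite /derive; apply: cvg_lim => //; apply: cvg_near_cst.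
near=> h.
have h0 : h != 0 by near: h; exact: nbhs_dnbhs_neq.

by rewrite /= mulmxDr -scalemxAr -[X in X - _]addrA addrK scalerA mulVf // scale1r.
Unshelve. all: by end_near. Qed.

Lemma aff_diff m p (A : 'M[R]_(p, m)) (c : 'cV[R]_p) (a : 'cV[R]_m) :
  differentiable (fun w : 'cV[R]_m => A *m w + c) a.
Proof.
have -> : (fun w : 'cV[R]_m => A *m w + c) =
  (\sum_(j < m) (fun w : 'cV[R]_m => w j 0 *: col j A)) + cst c.
  apply/funext => w /=; rewrite fct_sumE; congr (_ + _).
  apply/matrixP => i k; rewrite !mxE summxE; apply: eq_bigr => j _.
  by rewrite !mxE ord1 mulrC.
apply: differentiableD; last exact: differentiable_cst.
apply: differentiable_sum => j; apply: differentiableZl.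
exact: differentiable_coord.
Qed.

Lemma aff_d m p (A : 'M[R]_(p, m)) (c : 'cV[R]_p) (a v : 'cV[R]_m) :
  'd (fun w : 'cV[R]_m => A *m w + c) a v = A *m v.
Proof. by rewrite -deriveE ?aff_D //; exact: aff_diff. Qed.

Lemma aff_jac m p (A : 'M[R]_(p, m)) (c : 'cV[R]_p) (a : 'cV[R]_m) :
  Defs.jacobian (fun w : 'cV[R]_m => A *m w + c) a = A.
Proof.
apply/matrixP => i j; rewrite /Defs.jacobian mxE aff_d -colE mxE //.
Qed.

Lemma comp_deriv m p (A : 'M[R]_(p, m)) (f : R -> 'cV[R]_m) t :
  derivable f t 1 ->
  derivable (fun s => A *m f s) t 1 /\ derive1 (fun s => A *m f s) t = A *m derive1 f t.
Proof.
move=> /derivable1_diffP df.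
have e : (fun s => A *m f s) = (fun w => A *m w + 0) \o f.
  by apply/funext => s /=; rewrite addr0.
have dg : differentiable ((fun w => A *m w + 0) \o f) t.
  by apply: differentiable_comp => //; exact: aff_diff.
split; first by rewrite e; apply/derivable1_diffP.
rewrite e derive1E' // diff_comp //; last exact: aff_diff.
by rewrite /= aff_d derive1E'.
Qed.

End Aff.
Local Open Scope ring_scope.
Lemma sq0 (R : realType) m (x : 'cV[R]_m) : (x^T *m x) 0 0 = 0 -> x = 0.
Proof.
rewrite mxE => /eqP; rewrite psumr_eq0 => [/allP H|i _]; last first.
  by rewrite mxE sqr_ge0.
apply/matrixP => i j; rewrite ord1 mxE.
have := H i (mem_index_enum _); rewrite mxE /= -expr2 sqrf_eq0 => /eqP.
by [].
Qed.

Lemma row0_all (R : realType) n (r : 'rV[R]_n) :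
  (forall j : 'cV[R]_n, r *m j = 0) -> r = 0.
Proof. by move=> H; apply: trmx_inj; rewrite trmx0; apply: sq0; rewrite trmxK H mxE. Qed.

Lemma linalg (R : realType) (k ns : nat) (Mb Kn : 'M[R]_k) (Xb : 'M[R]_(k, ns)) :
  Mb^T = Mb -> Kn^T = Kn ->
  (forall y : 'cV[R]_k, Mb *m y = 0 -> y != 0 -> 0 < (y^T *m Kn *m y) 0 0) ->
  (forall j : 'cV[R]_ns, Xb *m j = 0 -> j = 0) ->
  Xb^T *m Mb = 0 ->
  let W := kermx Mb in
  let A := col_mx (col_mx (row_mx Mb (0 : 'M[R]_(k, ns))) (row_mx Xb^T (0 : 'M[R]_(ns, ns))))
                  (row_mx (W *m Kn) (- (W *m Xb))) in
  let sol := invmx (A^T *m A) *m A^T in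
  (forall u : 'cV[R]_(k + ns), sol *m (A *m u) = u) /\
  (forall v : 'cV[R]_ns, A *m (sol *m col_mx (col_mx 0 v) (0 : 'cV[R]_k)) = col_mx (col_mx 0 v) 0).
Proof.
move=> MbT KT Kpd Xinj XM W A sol.
have WM : W *m Mb = 0 by exact: mulmx_ker.
have MX : Mb *m Xb = 0 by apply: trmx_inj; rewrite trmx_mul MbT XM trmx0.
have kerW : forall y : 'cV[R]_k, Mb *m y = 0 -> exists z : 'rV[R]_k, y^T = z *m W.
  move=> y My; have : (y^T <= W)%MS.
    by apply/sub_kermxP; rewrite -MbT -trmx_mul My trmx0.
  by case/submxP => z ->; exists z.
clearbody W.
have Aeq : forall (y : 'cV[R]_k) (j : 'cV[R]_ns), A *m col_mx y j =
    col_mx (col_mx (Mb *m y) (Xb^T *m y)) (W *m Kn *m y - W *m Xb *m j).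
  move=> y j; rewrite /A !mul_col_mx !mul_row_col !mul0mx !addr0 mulNmx //.
have Ainj : forall u : 'cV[R]_(k + ns), A *m u = 0 -> u = 0.
  move=> u; rewrite -[u](vsubmxK u); set y := usubmx u; set j := dsubmx u.
  rewrite Aeq => /eqP; rewrite !col_mx_eq0 => /andP[/andP[/eqP My /eqP Xy] /eqP WK].
  have y0 : y = 0.
    apply/eqP; apply/negP => /negP yn0; have := Kpd y My yn0.
    case: (kerW y My) => z zE.
    have : y^T *m Kn *m y = y^T *m Xb *m j.
      have WK' : W *m Kn *m y = W *m Xb *m j by apply/eqP; rewrite -subr_eq0 WK.
      by rewrite zE -!(mulmxA z) WK'.
    by move=> ->; rewrite -(trmxK Xb) -trmx_mul Xy trmx0 mul0mx mxE ltxx.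
  move/eqP: WK; rewrite y0 mulmx0 sub0r oppr_eq0 => /eqP WK.
  have X0 : Xb *m j = 0.
    have MXj : Mb *m (Xb *m j) = 0 by rewrite mulmxA MX mul0mx.
    apply: sq0; have [z zE] := kerW (Xb *m j) MXj.
    by rewrite zE -mulmxA (mulmxA W) WK mulmx0 mxE.
  by rewrite (Xinj j X0) col_mx0.
have Bu : A^T *m A \in unitmx.
  rewrite -row_free_unit -kermx_eq0; apply/eqP/row_matrixP => i.
  rewrite row0; set r := row i _.
  have rB : r *m (A^T *m A) = 0 by rewrite /r -row_mul mulmx_ker row0.
  apply: trmx_inj; rewrite trmx0; apply: Ainj; apply: sq0.
  rewrite trmx_mul trmxK mulmxA -(mulmxA r) rB mul0mx mxE //.
split.
  by move=> u; rewrite /sol -mulmxA (mulmxA A^T) mulKmx.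
move=> v; set b := col_mx _ _.
set e := b - A *m (sol *m b).
have Ae : A^T *m e = 0.
  rewrite /e mulmxBr /sol !mulmxA mulmxV // mul1mx subrr //.
have eA : forall u : 'cV[R]_(k + ns), e^T *m A *m u = 0.
  by move=> u; rewrite -(trmxK A) -trmx_mul Ae trmx0 !mul0mx.
have e_dec := vsubmxK e; set e12 := usubmx e in e_dec; set e3 := dsubmx e in e_dec.
have e12_dec := vsubmxK e12; set e1 := usubmx e12 in e12_dec;
  set e2 := dsubmx e12 in e12_dec.
have eAyj : forall (y : 'cV[R]_k) (j : 'cV[R]_ns), (e1^T *m (Mb *m y) + e2^T *m (Xb^T *m y)) +
                        e3^T *m (W *m Kn *m y - W *m Xb *m j) = 0.
  move=> y j; have := eA (col_mx y j); rewrite -mulmxA Aeq -e_dec -e12_dec.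
  by rewrite !tr_col_mx !mul_row_col.
have e3W : e3^T *m W *m Xb = 0.
  apply: row0_all => j; have := eAyj 0 j.
  rewrite !mulmx0 !addr0 sub0r add0r mulmxN => /eqP; rewrite oppr_eq0 !mulmxA.
  by move/eqP.
set z := W^T *m e3.
have zT : z^T = e3^T *m W by rewrite /z trmx_mul trmxK.
have Mz : Mb *m z = 0.
  by rewrite /z mulmxA -[Mb]MbT -trmx_mul WM trmx0 mul0mx.
have Xz : Xb^T *m z = 0.
  by apply: trmx_inj; rewrite trmx_mul zT trmxK e3W trmx0.
have z0 : z = 0.
  apply/eqP; apply/negP => /negP zn0; have := Kpd z Mz zn0.
  have := eAyj z 0; rewrite Mz Xz !mulmx0 subr0 !add0r !mulmxA -zT => ->.
  by rewrite mxE ltxx.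
have e3W0 : e3^T *m W = 0 by rewrite -zT z0 trmx0.
have e2X : forall y : 'cV[R]_k, e1^T *m (Mb *m y) + e2^T *m (Xb^T *m y) = 0.
  move=> y; have := eAyj y 0; rewrite mulmx0 subr0 !mulmxA e3W0 !mul0mx addr0.
  by [].
have e20 : e2 = 0.
  apply: Xinj; apply: sq0; have := e2X (Xb *m e2).
  rewrite (mulmxA Mb) MX mul0mx mulmx0 add0r => H.
  by rewrite trmx_mul -mulmxA H mxE.
have ee : e^T *m (b - A *m (sol *m b)) = e^T *m b.
  by rewrite mulmxBr mulmxA eA subr0.
have e0 : e = 0.
  apply: sq0; change (e^T *m (b - A *m (sol *m b))) with (e^T *m e) in ee.
  rewrite ee {1}/b -e_dec -e12_dec !tr_col_mx !mul_row_col e20 trmx0 !mul0mx.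
  by rewrite !mulmx0 !addr0 mxE.
by apply/esym/eqP; rewrite -subr_eq0 -/e e0.
Qed.

Lemma jac_id (R : realType) n (p : 'cV[R]_n) : Defs.jacobian (fun w : 'cV[R]_n => w) p = 1%:M.
Proof.
rewrite (_ : (fun w : 'cV[R]_n => w) = fun w => 1%:M *m w + 0) ?aff_jac //.
by apply/funext => w; rewrite mul1mx addr0.
Qed.

Lemma jac_cst (R : realType) m n (c : 'cV[R]_n) (p : 'cV[R]_m) :
  Defs.jacobian (fun _ : 'cV[R]_m => c) p = 0.
Proof.
rewrite (_ : (fun _ : 'cV[R]_m => c) = fun w => (0 : 'M[R]_(n, m)) *m w + c) ?aff_jac //.
by apply/funext => w; rewrite mul0mx add0r.
Qed.

Lemma entry_delta (R : realType) m n (B : 'M[R]_(m, n)) i j :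
  ((delta_mx i 0 : 'cV[R]_m)^T *m B *m (delta_mx j 0 : 'cV[R]_n)) 0 0 = B i j.
Proof. by rewrite trmx_delta -rowE -colE !mxE. Qed.

Unset Implicit Arguments.

Theorem proposition7 (R : realType) (n k ns : nat)
  (Msig Mnu C : 'M[R]_n) (P : 'M[R]_(n, k)) (Xs : 'M[R]_(n, ns)) :
  Msig^T = Msig -> possemidef Msig ->
  Mnu^T = Mnu -> posdef Mnu ->
  let Mbar := P^T *m Msig *m P in
  let Knu := P^T *m C^T *m Mnu *m C *m P in
  let Xbar := P^T *m Xs in
  (forall lam : R, 0 < lam -> posdef (lam *: Mbar + Knu)) ->
  \rank Xbar = ns ->
  (forall (u : 'cV[R]_ns) (w : 'cV[R]_k), (Xbar *m u)^T *m (Mbar *m w) = 0) ->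
  inductance_like
    (fun (da : 'cV[R]_k) (di : 'cV[R]_ns) (a : 'cV[R]_k) (i v : 'cV[R]_ns) (t : R) =>
       col_mx (Mbar *m da + Knu *m a - Xbar *m i) (Xbar^T *m da - v)).
Proof.
move=> MsT _ MnT _ Mbar Knu Xbar Hpd Hrank Horth.
have MbT : Mbar^T = Mbar by rewrite /Mbar !trmx_mul trmxK MsT mulmxA.
have KT : Knu^T = Knu by rewrite /Knu !trmx_mul !trmxK MnT !mulmxA.
clearbody Mbar Knu Xbar.
have Kpd : forall y : 'cV[R]_k, Mbar *m y = 0 -> y != 0 -> 0 < (y^T *m Knu *m y) 0 0.
  move=> y My yn0; have := Hpd 1 ltr01 y yn0.
  by rewrite scale1r mulmxDr mulmxDl -(mulmxA y^T Mbar) My mulmx0 add0r.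
have Xinj : forall j : 'cV[R]_ns, Xbar *m j = 0 -> j = 0.
  move=> j Xj; have rf : row_free Xbar^T by rewrite /row_free mxrank_tr Hrank.
  apply: trmx_inj; rewrite trmx0; apply: (row_free_inj rf).
  by rewrite -trmx_mul Xj trmx0 mul0mx.
have XM : Xbar^T *m Mbar = 0.
  apply/matrixP => i j; rewrite [RHS]mxE -entry_delta.
  have := Horth (delta_mx i 0) (delta_mx j 0); rewrite trmx_mul -!mulmxA => ->.
  by rewrite mxE.
have [solK solE] := linalg MbT KT Kpd Xinj XM.
set W := kermx Mbar in solK solE.
set A := col_mx _ _ in solK solE.
set sol := invmx _ *m _ in solK solE.
have WM : W *m Mbar = 0 by exact: mulmx_ker.
have kerW : forall y : 'cV[R]_k, Mbar *m y = 0 -> exists z : 'rV[R]_k, y^T = z *m W.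
  move=> y My; have : (y^T <= W)%MS.
    by apply/sub_kermxP; rewrite -MbT -trmx_mul My trmx0.
  by case/submxP => z ->; exists z.
have Aeq : forall (y : 'cV[R]_k) (j : 'cV[R]_ns), A *m col_mx y j =
    col_mx (col_mx (Mbar *m y) (Xbar^T *m y)) (W *m Knu *m y - W *m Xbar *m j).
  move=> y j; rewrite /A !mul_col_mx !mul_row_col !mul0mx !addr0 mulNmx //.
clearbody W A sol.
pose rhs (x : 'cV[R]_k) (i v : 'cV[R]_ns) :=
  col_mx (col_mx (Xbar *m i - Knu *m x) v) (0 : 'cV[R]_k).
pose E1 := col_mx (col_mx (0 : 'M[R]_(k, ns)) (1%:M : 'M[R]_ns)) (0 : 'M[R]_(k, ns)).
have E1v : forall v : 'cV[R]_ns, E1 *m v = col_mx (col_mx 0 v) 0.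
  by move=> v; rewrite /E1 !mul_col_mx !mul0mx mul1mx.
have rhsE : forall x i v, rhs x i v = rhs x i 0 + E1 *m v.
  by move=> x i v; rewrite E1v /rhs !add_col_mx !addr0 add0r.
pose D := dsubmx (sol *m E1).
have Dpd : posdef D.
  move=> w wn0.
  have Au : A *m (sol *m (E1 *m w)) = E1 *m w by rewrite E1v solE.
  move: Au; set u := sol *m (E1 *m w).
  have Dw : D *m w = dsubmx u by rewrite /D mul_dsub_mx -mulmxA.
  rewrite -(vsubmxK u) Aeq E1v; set y := usubmx u; set j := dsubmx u.
  move=> /eq_col_mx [/eq_col_mx [My Xy] WK].
  rewrite -mulmxA Dw -/j -Xy trmx_mul trmxK.
  have yn0 : y != 0.
    by apply/negP => /eqP y0; move: wn0; rewrite -Xy y0 mulmx0 eqxx.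
  have := Kpd y My yn0.
  have [z zE] := kerW y My.
  have WK' : W *m Knu *m y = W *m Xbar *m j by apply/eqP; rewrite -subr_eq0 WK.
  suff -> : y^T *m Knu *m y = y^T *m Xbar *m j by [].
  by rewrite zE -!(mulmxA z) WK'.
exists (fun x i v t => usubmx (sol *m rhs x i v)), (fun i x t => i),
  (fun x i v t => dsubmx (sol *m rhs x i v)).
split.
  move=> i x t; split.
    rewrite (_ : (fun i' : 'cV[R]_ns => i') = fun w => 1%:M *m w + 0).
      exact: aff_diff.
    by apply/funext => w; rewrite mul1mx addr0.
  split; last exact: derivable_cst.
  rewrite (_ : (fun _ : 'cV[R]_k => i) = fun w => (0 : 'M[R]_(ns, k)) *m w + i).
    exact: aff_diff.
  by apply/funext => w; rewrite mul0mx add0r.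
split.
  by move=> i x t; rewrite jac_id unitmx1.
split.
  move=> x i v t psi.
  have dc : derive1 (fun _ : R => i) t = 0 by rewrite derive1E; exact: derive_cst.
  have -> : psi = (fun v' => D *m v' + dsubmx (sol *m rhs x i 0)).
    apply/funext => v'; rewrite /psi jac_id jac_cst dc invmx1 mul1mx mul0mx.
    rewrite !oppr0 !add0r rhsE mulmxDr /D mul_dsub_mx -mulmxA addrC.
    by apply/matrixP => a b; rewrite !mxE.
  by split; [exact: aff_diff | rewrite aff_jac].
move=> xs is_ vs t0 dxs dis G G0 dG DG.
move/eqP: G0; rewrite /G col_mx_eq0 => /andP[/eqP h1 /eqP h2].
move/eqP: h1; rewrite subr_eq0 => /eqP h1.
move/eqP: h2; rewrite subr_eq0 => /eqP h2.
pose L := W *m usubmx (1%:M : 'M[R]_(k + ns)).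
have LG : (fun s => L *m G s) =
    (fun s => (W *m Knu) *m xs s) - (fun s => (W *m Xbar) *m is_ s).
  apply/funext => s /=; rewrite /L /G -mulmxA mul_usub_mx mul1mx col_mxKu.
  by rewrite !mulmxDr mulmxN !mulmxA WM mul0mx add0r.
have [dLG DLG] := comp_deriv L dG.
have [d1 D1] := comp_deriv (W *m Knu) (dxs t0).
have [d2 D2] := comp_deriv (W *m Xbar) (dis t0).
rewrite DG mulmx0 LG derive1E deriveB // -!derive1E D1 D2 in DLG.
have Hc : A *m col_mx (derive1 xs t0) (derive1 is_ t0) = rhs (xs t0) (is_ t0) (vs t0).
  rewrite Aeq /rhs h2 DLG -h1 addrK //.
have Hs := solK (col_mx (derive1 xs t0) (derive1 is_ t0)).
rewrite Hc in Hs.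
split; first by rewrite Hs col_mxKu.
split; first exact: dis.
by rewrite Hs col_mxKd.
Qed.
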